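(* Let $n\ge1$. For each $i\in\{1,\dots,n\}$ let $\mathbf{r}_i(1),\mathbf{r}_i(2),\dots,\mathbf{r}_i(L_i)$ be a path of pairwise distinct lattice sites with $\mathbf{r}_i(1)$ equal to the origin and $L_i\ge n$. A configuration is a choice of sticking times $\tau_i\in\{1,\dots,L_i\}$, with labels $\mathbf{s}_i=\mathbf{r}_i(\tau_i)$. Call it well-ordered if for all $i,j$ and all $t<\tau_i$, $\mathbf{s}_j=\mathbf{r}_i(t)$ implies $j<i$. Let the cluster $S$ be the set of live sites $\{\mathbf{r}_i(t): 1\le i\le n,\ t\le\tau_i\}$. Call the configuration singly-occupied if every site of $S$ equals $\mathbf{s}_j$ for exactly one $j$. Then there is exactly one configuration that is both well-ordered and singly-occupied. It is the sequential-dynamics configuration: for each $i$ in increasing order, $\tau_i$ is the least $t$ such that $\mathbf{r}_i(t)\notin\{\mathbf{s}_1,\dots,\mathbf{s}_{i-1}\}$. *)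

(* Defs.v *)
From mathcomp Require Import all_boot all_order all_algebra.
Set Implicit Arguments. Unset Strict Implicit. Unset Printing Implicit Defensive.
Import Order.TTheory GRing.Theory Num.Theory.
Local Open Scope ring_scope.

Definition site (d : nat) := 'rV[int]_d.

Definition lattice_adj (d : nat) (x y : site d) : Prop :=
  (\sum_(k < d) `|x 0 k - y 0 k|)%R = 1.

(* Walker i (i : 'I_n, i.e. walkers numbered 0..n-1) follows the path
   r i 1, ..., r i (L i); times are 1-based natural numbers. *)
Definition is_path (d : nat) (r : nat -> site d) (Li : nat) : Prop :=
  r 1%N = 0 /\
  (forall t, (1 <= t)%N -> (t < Li)%N -> lattice_adj (r t) (r t.+1)) /\
  (forall t t', (1 <= t <= Li)%N -> (1 <= t' <= Li)%N -> r t = r t' -> t = t').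

Definition is_config (n : nat) (L : 'I_n -> nat) (tau : 'I_n -> nat) : Prop :=
  forall i, (1 <= tau i <= L i)%N.

Definition label (d n : nat) (r : 'I_n -> nat -> site d) (tau : 'I_n -> nat)
  (i : 'I_n) : site d := r i (tau i).

Definition well_ordered (d n : nat) (r : 'I_n -> nat -> site d)
  (tau : 'I_n -> nat) : Prop :=
  forall (i j : 'I_n) (t : nat), (1 <= t)%N -> (t < tau i)%N ->
    label r tau j = r i t -> (j < i)%N.

Definition in_cluster (d n : nat) (r : 'I_n -> nat -> site d)
  (tau : 'I_n -> nat) (x : site d) : Prop :=
  exists (i : 'I_n) (t : nat), (1 <= t <= tau i)%N /\ x = r i t.

Definition singly_occupied (d n : nat) (r : 'I_n -> nat -> site d)
  (tau : 'I_n -> nat) : Prop :=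
  forall x, in_cluster r tau x -> exists! j : 'I_n, x = label r tau j.

Definition sequential (d n : nat) (r : 'I_n -> nat -> site d)
  (tau : 'I_n -> nat) : Prop :=
  forall i : 'I_n,
    (1 <= tau i)%N /\
    (forall j : 'I_n, (j < i)%N -> r i (tau i) <> label r tau j) /\
    (forall t, (1 <= t)%N -> (t < tau i)%N ->
       exists j : 'I_n, (j < i)%N /\ r i t = label r tau j).

(* Main.v *)
Require Import Defs.
From mathcomp Require Import all_boot all_order all_algebra.
From mathcomp Require Import zify.

Section S.
Variables (d n : nat) (r : 'I_n -> nat -> site d) (tau : 'I_n -> nat).
Hypothesis H : sequential r tau.

Lemma seq_inj {i j : 'I_n} : label r tau i = label r tau j -> i = j.
Proof.
move=> E; case: (ltngtP i j) => h.
- by have [_ [H2 _]] := H j; case: (H2 i h); rewrite E.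
- by have [_ [H2 _]] := H i; case: (H2 j h); exact: E.
- exact: val_inj.
Qed.

Lemma seq_wo : well_ordered r tau.
Proof.
move=> i j t h1 h2 E; have [_ [_ H3]] := H i.
have [k [hk Ek]] := H3 t h1 h2.
by rewrite (seq_inj (etrans E Ek)).
Qed.

Lemma seq_so : singly_occupied r tau.
Proof.
move=> x [i [t [/andP [h1 h2] ->]]].
have [j Ej] : exists j, r i t = label r tau j.
  move: h2; rewrite leq_eqVlt => /orP [/eqP -> | h2]; first by exists i.
  by have [_ [_ H3]] := H i; have [k [_ Ek]] := H3 t h1 h2; exists k.
exists j; split=> // j' E'; apply: seq_inj; by rewrite -Ej -E'.
Qed.

Lemma seq_uniq (L : 'I_n -> nat) (tau' : 'I_n -> nat) :
  is_config L tau' -> well_ordered r tau' -> singly_occupied r tau' ->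
  forall i, tau' i = tau i.
Proof.
move=> hc hwo hso.
suff K : forall k (i : 'I_n), (i < k)%N -> tau' i = tau i.
  by move=> i; apply: (K i.+1).
elim=> [//|k IH] i hi.
have El : forall j : 'I_n, (j < i)%N -> label r tau' j = label r tau j.
  by move=> j hj; rewrite /label IH //; apply: leq_trans hj _.
have [H1 [H2 H3]] := H i.
have /andP [c1 c2] := hc i.
case: (ltngtP (tau' i) (tau i)) => h //.
- have [j [hj Ej]] := H3 _ c1 h.
  have [y [_ U]] := hso (label r tau' i)
     (ex_intro _ i (ex_intro _ (tau' i) (conj (introT andP (conj c1 (leqnn _))) erefl))).
  have e1 := U i erefl.
  have e2 := U j (etrans Ej (esym (El j hj))).
  by move: hj; rewrite -e2 e1 ltnn.
- have [y [Ey _]] := hso (r i (tau i))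
     (ex_intro _ i (ex_intro _ (tau i) (conj (introT andP (conj H1 (ltnW h))) erefl))).
  have hy := hwo i y (tau i) H1 h (esym Ey).
  by case: (H2 y hy); rewrite Ey El.
Qed.
End S.

Theorem mainTheorem9 (d n : nat) (L : 'I_n -> nat)
  (r : 'I_n -> nat -> site d) :
  (1 <= n)%N ->
  (forall i, (n <= L i)%N) ->
  (forall i, is_path (r i) (L i)) ->
  exists tau : 'I_n -> nat,
    [/\ is_config L tau, well_ordered r tau, singly_occupied r tau,
        sequential r tau &
        forall tau' : 'I_n -> nat,
          is_config L tau' -> well_ordered r tau' -> singly_occupied r tau' ->
          forall i, tau' i = tau i].
Proof.
case: n L r => [//|m] L r _ HL Hp.
pose R := fun k t => r (inord k) t.
have key : forall k, (k <= m.+1)%N -> exists f : nat -> nat, forall i, (i < k)%N ->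
   [/\ (1 <= f i <= i.+1)%N, (forall j, (j < i)%N -> R i (f i) <> R j (f j)) &
       (forall t, (1 <= t)%N -> (t < f i)%N -> exists2 j, (j < i)%N & R i t = R j (f j))].
  elim=> [|k IH] hk; first by exists (fun _ => 0%N).
  have [f Hf] := IH (ltnW hk).
  pose s := [seq R j (f j) | j <- iota 0 k].
  have ex : exists t, ((1 <= t)%N && (R k t \notin s)) && (t <= k.+1)%N.
    have : ~~ all (fun x => x \in s) [seq R k t | t <- iota 1 k.+1].
      apply/negP => /allP sub.
      have U : uniq [seq R k t | t <- iota 1 k.+1].
        rewrite map_inj_in_uniq ?iota_uniq // => t t'.
        rewrite !mem_iota => /andP [a1 a2] /andP [b1 b2].
        have [_ [_ Hinj]] := Hp (inord k).
        have hL := HL (inord k).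
        apply: Hinj; apply/andP; split => //.
          by move: hL hk a2 b2; lia.
        by move: hL hk a2 b2; lia.
      have := uniq_leq_size U sub.
      by rewrite !size_map !size_iota ltnn.
    case/allPn => x /mapP [t ht ->] hn; exists t.
    move: ht; rewrite mem_iota => /andP [-> ht]; rewrite hn /=.
    by move: ht; lia.
  have ex' : exists t, (1 <= t)%N && (R k t \notin s).
    by have [t /andP [h _]] := ex; exists t.
  case: (ex_minnP ex') => t0 /andP [h1 hs] hmin.
  have hb : (t0 <= k.+1)%N.
    have [t /andP [/hmin h ht]] := ex; exact: leq_trans h ht.
  exists (fun x => if x == k then t0 else f x).
  move=> i; rewrite ltnS leq_eqVlt => /orP [/eqP -> | hi].
  - rewrite eqxx; split.
    + by rewrite h1 hb.
    + move=> j hj; rewrite (ltn_eqF hj) => E.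
      by move: hs; rewrite E; apply/negP/negPn; apply: map_f; rewrite mem_iota.
    + move=> t ht1 ht2.
      have : ~~ ((1 <= t)%N && (R k t \notin s)).
        by apply/negP => /hmin; rewrite leqNgt ht2.
      rewrite ht1 /= negbK => /mapP [j hj ->]; exists j.
        by move: hj; rewrite mem_iota.
      by move: hj; rewrite mem_iota => /andP [_ hj]; rewrite (ltn_eqF hj).
  - rewrite (ltn_eqF hi).
    have [A B C] := Hf i hi; split => //.
    + move=> j hj; rewrite (ltn_eqF (ltn_trans hj hi)); exact: B.
    + move=> t ht1 ht2; have [j hj E] := C t ht1 ht2; exists j => //.
      by rewrite (ltn_eqF (ltn_trans hj hi)).
have [f Hf] := key m.+1 (leqnn _).
have rR : forall (i : 'I_m.+1) t, r i t = R i t by move=> i t; rewrite /R inord_val.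
have Hs : sequential r (fun i => f i).
  move=> i; have [/andP [A1 A2] B C] := Hf i (ltn_ord i); split => //; split.
  - by move=> j hj; rewrite /label !rR; apply: B.
  - move=> t ht1 ht2; have [j hj E] := C t ht1 ht2.
    have hjn : (j < m.+1)%N by apply: ltn_trans hj (ltn_ord i).
    exists (inord j); rewrite inordK //; split => //.
    by rewrite /label !rR E inordK.
exists (fun i => f i); split.
- move=> i; have [/andP [A1 A2] _ _] := Hf i (ltn_ord i).
  have := HL i; have := ltn_ord i; move: A1 A2; lia.
- exact: seq_wo.
- exact: seq_so.
- exact: Hs.
- move=> tau' hc hwo hso i; exact: (@seq_uniq _ _ _ _ Hs L tau' hc hwo hso i).
Qed.
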